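(* Let $n\geq 3$, $d\geq 2$ and $\ell\in\mathbb{R}_{>0}^n$. The map $\varphi_d:M_d(\ell)\to M_{d+1}(\ell)$ is $2$-to-$1$ on the set of $d$-dimensional polygons and $1$-to-$1$ elsewhere; that is, for $[P]\in M_d(\ell)$ the set $\varphi_d^{-1}(\varphi_d([P]))$ has exactly two elements if $\dim(P)=d$ and exactly one element if $\dim(P)<d$.
   Context: $V_d(\ell)=\{(\mathbf{v}_1,\ldots,\mathbf{v}_{n-1})\in(\mathbb{R}^d)^{n-1} : \|\mathbf{v}_i-\mathbf{v}_{i-1}\|=l_i,\ i=1,\ldots,n\}$ with $\mathbf{v}_0=\mathbf{v}_n=\mathbf{0}$; $M_d(\ell)=V_d(\ell)/SO(d)$ with $SO(d)$ acting diagonally, $[P]$ the class of $P$. $\dim(P)$ (and $\dim([P])$) is the dimension of the linear span of the vertices of $P$. For a fixed linear Euclidean isometry $f_d:\mathbb{R}^d\to\mathbb{R}^{d+1}$, $F_d(\mathbf{v}_1,\ldots,\mathbf{v}_{n-1})=(f_d(\mathbf{v}_1),\ldots,f_d(\mathbf{v}_{n-1}))$ and $\varphi_d([P])=[F_d(P)]$. *)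

(* Defs.v *)
From HB Require Import structures.
From mathcomp Require Import all_boot all_order all_algebra.
From mathcomp Require Import all_classical all_reals.
Set Implicit Arguments. Unset Strict Implicit. Unset Printing Implicit Defensive.
Import Order.TTheory GRing.Theory Num.Theory.
Local Open Scope ring_scope.
Local Open Scope classical_set_scope.

Section PolygonSpaces.
Variable R : realType.

Definition enorm (d : nat) (v : 'rV[R]_d) : R := Num.sqrt (\sum_(j < d) v 0 j ^+ 2).

(* A polygon P in (R^d)^(n-1): row k (k = 0..n-2) is the vertex v_(k+1).
   vtx P i is v_i, with v_0 = v_n = 0. *)
Definition vtx (n d : nat) (P : 'M[R]_(n.-1, d)) (i : nat) : 'rV[R]_d :=
  if i is k.+1 then (if @insub _ (fun m => m < n.-1)%N _ k is Some j then row j P else 0)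
  else 0.

(* l k (k : 'I_n) is the paper's l_(k+1): ||v_(k+1) - v_k|| = l_(k+1). *)
Definition Vpol (n d : nat) (l : 'I_n -> R) : set 'M[R]_(n.-1, d) :=
  [set P | forall k : 'I_n, enorm (vtx P k.+1 - vtx P k) = l k].

(* SO(d) acting on column vectors; on the row representation v^T |-> v^T g^T. *)
Definition SOd (d : nat) : set 'M[R]_d :=
  [set g | g *m g^T = 1%:M /\ \det g = 1].

Definition rot_equiv (n d : nat) (P Q : 'M[R]_(n.-1, d)) : Prop :=
  exists g, SOd g /\ Q = P *m g^T.

(* The class [P] in M_d(l) = V_d(l)/SO(d), as a subset of V_d(l). *)
Definition pclass (n d : nat) (l : 'I_n -> R) (P : 'M[R]_(n.-1, d)) :
  set 'M[R]_(n.-1, d) := [set Q | Vpol l Q /\ rot_equiv P Q].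

Definition Mpol (n d : nat) (l : 'I_n -> R) : set (set 'M[R]_(n.-1, d)) :=
  [set C | exists P, Vpol l P /\ C = pclass l P].

Definition lin_isometry (d : nat) (A : 'M[R]_(d, d.+1)) : Prop :=
  forall v : 'rV[R]_d, enorm (v *m A) = enorm v.

Definition Fmap (n d : nat) (A : 'M[R]_(d, d.+1)) (P : 'M[R]_(n.-1, d)) :
  'M[R]_(n.-1, d.+1) := P *m A.

(* phi_d on classes: phi_d(C) = [F_d(Q)] for Q in C (written choice-free as
   the union of the classes of the F_d(Q), Q in C; for C = [P] this is [F_d(P)]). *)
Definition phimap (n d : nat) (l : 'I_n -> R) (A : 'M[R]_(d, d.+1))
  (C : set 'M[R]_(n.-1, d)) : set 'M[R]_(n.-1, d.+1) :=
  [set Y | exists Q, C Q /\ Vpol l Y /\ rot_equiv (Fmap A Q) Y].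

Definition phifiber (n d : nat) (l : 'I_n -> R) (A : 'M[R]_(d, d.+1))
  (P : 'M[R]_(n.-1, d)) : set (set 'M[R]_(n.-1, d)) :=
  [set C | Mpol l C /\ phimap l A C = phimap l A (pclass l P)].

End PolygonSpaces.

(* Main.v *)
Require Import Defs.
From HB Require Import structures.
From mathcomp Require Import all_boot all_order all_algebra.
From mathcomp Require Import all_classical all_reals.
From mathcomp Require Import ring lra.
Import Order.TTheory GRing.Theory Num.Theory.
Local Open Scope ring_scope.
Local Open Scope classical_set_scope.
Set Implicit Arguments. Unset Strict Implicit. Unset Printing Implicit Defensive.

Section Aux.
Variable R : realType.

Definition dotv (k : nat) (u v : 'rV[R]_k) : R := (u *m v^T) 0 0.

Lemma dotvE k (u v : 'rV[R]_k) : dotv u v = \sum_j u 0 j * v 0 j.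
Proof. by rewrite /dotv mxE; apply: eq_bigr => j _; rewrite mxE. Qed.

Lemma dotvC k (u v : 'rV[R]_k) : dotv u v = dotv v u.
Proof. by rewrite !dotvE; apply: eq_bigr => j _; rewrite mulrC. Qed.

Lemma dotvBl k (u v w : 'rV[R]_k) : dotv (u - v) w = dotv u w - dotv v w.
Proof. by rewrite /dotv mulmxBl mxE [X in _ = X - _]mxE /= !mxE. Qed.

Lemma dotvBr k (u v w : 'rV[R]_k) : dotv w (u - v) = dotv w u - dotv w v.
Proof. by rewrite dotvC dotvBl !(dotvC w). Qed.

Lemma dotvZl k a (u w : 'rV[R]_k) : dotv (a *: u) w = a * dotv u w.
Proof. by rewrite /dotv -scalemxAl mxE. Qed.

Lemma dotv_ge0 k (u : 'rV[R]_k) : 0 <= dotv u u.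
Proof. by rewrite dotvE sumr_ge0 // => j _; rewrite -expr2 sqr_ge0. Qed.

Lemma dotv_eq0 k (u : 'rV[R]_k) : dotv u u = 0 -> u = 0.
Proof.
rewrite dotvE => /eqP; rewrite psumr_eq0 => [/allP H|j _]; last by rewrite -expr2 sqr_ge0.
apply/rowP => j; rewrite mxE; have := H j (mem_index_enum j).
by rewrite /= -expr2 sqrf_eq0 => /eqP.
Qed.

Lemma gram_entry m n k (X : 'M[R]_(m, k)) (Y : 'M[R]_(n, k)) i j :
  (X *m Y^T) i j = dotv (row i X) (row j Y).
Proof. by rewrite dotvE mxE; apply: eq_bigr => l _; rewrite !mxE. Qed.

Lemma mulmx11 k (a : 'M[R]_1) (w : 'rV[R]_k) : a *m w = a 0 0 *: w.
Proof. by rewrite {1}[a]mx11_scalar mul_scalar_mx. Qed.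

Definition ortho k (O : 'M[R]_k) := O *m O^T = 1%:M.

Lemma orthoT k (O : 'M[R]_k) : ortho O -> O^T *m O = 1%:M.
Proof. exact: mulmx1C. Qed.

Lemma orthoM k (O1 O2 : 'M[R]_k) : ortho O1 -> ortho O2 -> ortho (O1 *m O2).
Proof.
move=> h1 h2; rewrite /ortho trmx_mul mulmxA -(mulmxA O1) h2 mulmx1 //.
Qed.

Lemma ortho1 k : ortho (1%:M : 'M[R]_k).
Proof. by rewrite /ortho trmx1 mulmx1. Qed.

Lemma orthotr k (O : 'M[R]_k) : ortho O -> ortho O^T.
Proof. by move=> h; rewrite /ortho trmxK orthoT. Qed.

Lemma ortho_det k (O : 'M[R]_k) : ortho O -> \det O = 1 \/ \det O = -1.
Proof.
move=> h; have : \det O * \det O = 1 by rewrite -{2}det_tr -det_mulmx h det1.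
move=> e; have : (\det O - 1) * (\det O + 1) = 0.
  by rewrite mulrDr mulr1 mulrBl e mul1r addrA subrK subrr.
move/eqP; rewrite mulf_eq0 => /orP[]; rewrite ?subr_eq0 ?addr_eq0 => /eqP; tauto.
Qed.

Definition hh k (w : 'rV[R]_k) : 'M[R]_k :=
  1%:M - (2 / dotv w w) *: (w^T *m w).

Lemma hh_apply k (w u : 'rV[R]_k) : u *m hh w = u - (2 / dotv w w * dotv u w) *: w.
Proof.
by rewrite /hh mulmxBr mulmx1 -scalemxAr mulmxA mulmx11 scalerA.
Qed.

Lemma hh_sym k (w : 'rV[R]_k) : (hh w)^T = hh w.
Proof. by rewrite /hh linearB /= trmx1 linearZ /= trmx_mul trmxK. Qed.

Lemma hh_ortho k (w : 'rV[R]_k) : w != 0 -> ortho (hh w).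
Proof.
move=> wn0; have c0 : dotv w w != 0 by apply/eqP => /dotv_eq0 /eqP; rewrite (negbTE wn0).
apply/row_matrixP => i; rewrite hh_sym !rowE mulmx1 mulmxA hh_apply.
rewrite hh_apply dotvBl dotvZl.
rewrite -addrA -opprD -scalerDl.
set c := dotv w w; set a := dotv _ w.
have -> : 2 / c * a + 2 / c * (a - 2 / c * a * c) = 0 by field.
by rewrite scale0r subr0.
Qed.

Lemma gram_ortho m k (X Y : 'M[R]_(m, k)) :
  X *m X^T = Y *m Y^T -> exists O, ortho O /\ Y = X *m O.
Proof.
move=> hXY.
suff H : forall j, (j <= m)%N -> exists O, ortho O /\
    forall i : 'I_m, (i < j)%N -> row i (X *m O) = row i Y.
  have [O [hO hr]] := H m (leqnn m); exists O; split => //.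
  by apply/row_matrixP => i; rewrite hr.
elim => [_|j IH hj].
  by exists 1%:M; split; [exact: ortho1| move=> i].
have [O [hO hr]] := IH (ltnW hj).
have gX : (X *m O) *m (X *m O)^T = Y *m Y^T.
  by rewrite trmx_mul mulmxA -(mulmxA X) hO mulmx1.
pose i0 := Ordinal hj.
have hp : forall i : 'I_m, (i < j)%N ->
    dotv (row i Y) (row i0 (X *m O)) = dotv (row i Y) (row i0 Y).
  by move=> i hi; rewrite -{1}(hr i hi) -(gram_entry (X *m O) (X *m O)) gX gram_entry.
have hn : dotv (row i0 (X *m O)) (row i0 (X *m O)) = dotv (row i0 Y) (row i0 Y).
  by rewrite -(gram_entry (X *m O) (X *m O)) gX gram_entry.
case: (eqVneq (row i0 (X *m O)) (row i0 Y)) => [exy|nxy].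
  exists O; split => // i; rewrite ltnS leq_eqVlt => /orP [/eqP ei|hi]; last exact: hr.
  by have -> : i = i0 by apply/val_inj.
move: hp hn nxy; set x := row i0 (X *m O); set y := row i0 Y => hp hn nxy.
pose w := x - y. have wn0 : w != 0 by rewrite subr_eq0.
have c0 : dotv w w != 0 by apply/eqP => /dotv_eq0 /eqP; rewrite (negbTE wn0).
exists (O *m hh w); split; first exact: orthoM hO (hh_ortho wn0).
move=> i; rewrite mulmxA row_mul hh_apply.
rewrite ltnS leq_eqVlt => /orP [/eqP ei|hi].
  have -> : i = i0 by apply/val_inj.
  rewrite -/x.
  have ew : dotv w w = 2 * dotv x w.
    rewrite /w !dotvBl !dotvBr hn (dotvC y x); ring.
  have -> : 2 / dotv w w * dotv x w = 1.
    move: c0; rewrite ew => c0.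
    have t0 : dotv x w != 0 by apply: contraNneq c0 => ->; rewrite mulr0.
    by field.
  by rewrite scale1r /w opprB addrC subrK.
by rewrite hr // (dotvBr x y (row i Y)) hp // subrr mulr0 scale0r subr0.
Qed.

Definition refl k : 'M[R]_k.+1 := diag_mx (\row_j (if j == ord0 then -1 else 1)).

Lemma refl_ortho k : ortho (refl k).
Proof.
rewrite /ortho /refl tr_diag_mx mul_mx_diag; apply/matrixP => i j.
rewrite !mxE; case: (eqVneq i j) => [->|nij]; last by rewrite mulr0n mul0r.
by rewrite mulr1n; case: ifP => _; rewrite ?mulrNN mulr1.
Qed.

Lemma refl_det k : \det (refl k) = -1.
Proof.
rewrite det_diag big_ord_recl !mxE eqxx big1 ?mulr1 // => i _.
by rewrite mxE.
Qed.

Lemma refl_fix0 m k (Z : 'M[R]_(m, k.+1)) : (forall i, Z i ord0 = 0) -> Z *m refl k = Z.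
Proof.
move=> h; rewrite mul_mx_diag; apply/matrixP => i j; rewrite !mxE.
by case: (eqVneq j ord0) => [->|_]; rewrite ?h ?mul0r ?mulr1.
Qed.

Lemma dotvZr k a (u w : 'rV[R]_k) : dotv w (a *: u) = a * dotv w u.
Proof. by rewrite dotvC dotvZl dotvC. Qed.

Lemma ortho_det2 k (O : 'M[R]_k) : ortho O -> \det O * \det O = 1.
Proof. by move=> h; rewrite -{2}det_tr -det_mulmx h det1. Qed.

Lemma refl_fix m k (X : 'M[R]_(m, k.+1)) : (\rank X < k.+1)%N ->
  exists S, ortho S /\ \det S = -1 /\ X *m S = X.
Proof.
move=> hr.
pose K := kermx X^T.
have Kn0 : K != 0.
  rewrite -mxrank_eq0 /K mxrank_ker mxrank_tr.
  by rewrite subn_eq0 -ltnNge.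
have /existsP [i ui] : [exists i, row i K != 0].
  apply: contraR Kn0 => /existsPn H; apply/eqP/row_matrixP => i.
  by rewrite row0; apply/eqP; move: (H i); rewrite negbK.
pose u := row i K.
have hu : X *m u^T = 0.
  by rewrite -[X]trmxK -trmx_mul /u -row_mul mulmx_ker row0 trmx0.
have c0 : 0 < dotv u u.
  by rewrite lt_def dotv_ge0 andbT; apply/eqP => /dotv_eq0 /eqP; rewrite (negbTE ui).
pose c := Num.sqrt (dotv u u).
have cp : 0 < c by rewrite sqrtr_gt0.
pose e : 'rV[R]_k.+1 := c *: delta_mx 0 ord0.
have he : e *m e^T = u *m u^T.
  rewrite [LHS]mx11_scalar [RHS]mx11_scalar; congr (_%:M).
  rewrite -/(dotv e e) -/(dotv u u) /e dotvZl dotvZr dotvE big_ord_recl big1.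
    by rewrite !mxE eqxx /= mulr1 addr0 mulrA -expr2 sqr_sqrtr ?mulr1 // ltW.
  by move=> j _; rewrite !mxE /= mulr0.
have [O1 [hO1 eu]] := gram_ortho he.
exists (O1^T *m refl k *m O1); split; [|split].
- exact: orthoM (orthoM (orthotr hO1) (refl_ortho k)) hO1.
- by rewrite !det_mulmx det_tr refl_det mulrC mulrA ortho_det2 // mul1r.
rewrite !mulmxA refl_fix0; first by rewrite -mulmxA orthoT // mulmx1.
move=> j; rewrite gram_entry.
have : c * dotv (row j X) (row ord0 O1) = 0.
  rewrite -dotvZr (rowE ord0 O1) scalemxAl -/e -eu -(row_id ord0 u) -(gram_entry X u j ord0) hu.
  by rewrite mxE.
by move/eqP; rewrite mulf_eq0 (gt_eqF cp) /= => /eqP.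
Qed.

Lemma dotvDl k (u v w : 'rV[R]_k) : dotv (u + v) w = dotv u w + dotv v w.
Proof. by rewrite /dotv mulmxDl mxE. Qed.

Lemma dotvDr k (u v w : 'rV[R]_k) : dotv w (u + v) = dotv w u + dotv w v.
Proof. by rewrite dotvC dotvDl !(dotvC w). Qed.

Lemma gram_mul m k k' (X : 'M[R]_(m, k)) (M : 'M[R]_(k, k')) :
  M *m M^T = 1%:M -> (X *m M) *m (X *m M)^T = X *m X^T.
Proof. by move=> h; rewrite trmx_mul mulmxA -(mulmxA X) h mulmx1. Qed.

Lemma enorm_dot k (v : 'rV[R]_k) : enorm v = Num.sqrt (dotv v v).
Proof. by rewrite /enorm dotvE; congr Num.sqrt; apply: eq_bigr => j _; rewrite expr2. Qed.

Lemma enorm_mul k k' (M : 'M[R]_(k, k')) (v : 'rV[R]_k) :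
  M *m M^T = 1%:M -> enorm (v *m M) = enorm v.
Proof. by move=> h; rewrite !enorm_dot /dotv gram_mul. Qed.

Lemma iso_AAT d (A : 'M[R]_(d, d.+1)) : lin_isometry A -> A *m A^T = 1%:M.
Proof.
move=> hA.
have hq : forall v : 'rV_d, dotv (v *m A) (v *m A) = dotv v v.
  move=> v; have := hA v; rewrite !enorm_dot => /eqP.
  by rewrite eqr_sqrt ?dotv_ge0 // => /eqP.
have hb : forall u v : 'rV_d, dotv (u *m A) (v *m A) = dotv u v.
  move=> u v; have := hq (u + v); rewrite mulmxDl !dotvDl !dotvDr !hq.
  rewrite (dotvC (v *m A)) (dotvC v) => h; lra.
apply/matrixP => i j; rewrite gram_entry !rowE hb.
have -> : (1%:M : 'M[R]_d) i j = (1%:M *m (1%:M : 'M[R]_d)^T) i j by rewrite trmx1 mulmx1.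
by rewrite gram_entry !rowE !mulmx1.
Qed.

Lemma vtx_mul n d k (P : 'M[R]_(n.-1, d)) (M : 'M[R]_(d, k)) i :
  vtx (P *m M) i = vtx P i *m M.
Proof.
rewrite /vtx; case: i => [|i]; first by rewrite mul0mx.
by case: insub => [j|]; rewrite ?row_mul ?mul0mx.
Qed.

Lemma Vpol_mul n d k (l : 'I_n -> R) (P : 'M[R]_(n.-1, d)) (M : 'M[R]_(d, k)) :
  (forall v, enorm (v *m M) = enorm v) -> Vpol l P -> Vpol l (P *m M).
Proof. by move=> h hP j; rewrite !vtx_mul -mulmxBl h; exact: hP. Qed.

Lemma rot_equivE n d (P Q : 'M[R]_(n.-1, d)) :
  rot_equiv P Q <-> exists O, ortho O /\ \det O = 1 /\ Q = P *m O.
Proof.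
split.
  move=> [g [[hg dg] ->]]; exists g^T; split; [|split] => //.
  - by rewrite /ortho trmxK orthoT.
  - by rewrite det_tr.
move=> [O [hO [dO ->]]]; exists O^T; split; [split|] => //.
- by rewrite trmxK orthoT.
- by rewrite det_tr.
- by rewrite trmxK.
Qed.

Lemma rot_refl n d (P : 'M[R]_(n.-1, d)) : rot_equiv P P.
Proof. apply/rot_equivE; exists 1%:M; split; [exact: ortho1|split; [exact: det1|by rewrite mulmx1]]. Qed.

Lemma rot_sym n d (P Q : 'M[R]_(n.-1, d)) : rot_equiv P Q -> rot_equiv Q P.
Proof.
move=> /rot_equivE [O [hO [dO ->]]]; apply/rot_equivE; exists O^T; split; [|split].
- exact: orthotr.
- by rewrite det_tr.
- by rewrite -mulmxA hO mulmx1.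
Qed.

Lemma rot_trans n d (P Q S : 'M[R]_(n.-1, d)) :
  rot_equiv P Q -> rot_equiv Q S -> rot_equiv P S.
Proof.
move=> /rot_equivE [O [hO [dO ->]]] /rot_equivE [O' [hO' [dO' ->]]].
apply/rot_equivE; exists (O *m O'); split; [|split].
- exact: orthoM.
- by rewrite det_mulmx dO dO' mulr1.
- by rewrite mulmxA.
Qed.

Lemma pclass_eq n d (l : 'I_n -> R) (P Q : 'M[R]_(n.-1, d)) :
  rot_equiv P Q -> pclass l P = pclass l Q.
Proof.
move=> h; apply/seteqP; split => Y [hY hr]; split => //.
  exact: rot_trans (rot_sym h) hr.
exact: rot_trans h hr.
Qed.

Lemma pclass_mem n d (l : 'I_n -> R) (P : 'M[R]_(n.-1, d)) : Vpol l P -> pclass l P P.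
Proof. by move=> h; split => //; exact: rot_refl. Qed.

Lemma gram_rot m k (X Y : 'M[R]_(m, k.+1)) : (\rank X < k.+1)%N ->
  X *m X^T = Y *m Y^T -> exists O, ortho O /\ \det O = 1 /\ Y = X *m O.
Proof.
move=> hr hg; have [O [hO ->]] := gram_ortho hg.
have [dO|dO] := ortho_det hO; first by exists O.
have [S [hS [dS hXS]]] := refl_fix hr.
exists (S *m O); split; [|split].
- exact: orthoM.
- by rewrite det_mulmx dS dO mulrNN mulr1.
- by rewrite mulmxA hXS.
Qed.

Lemma phimap_char n d (l : 'I_n -> R) (A : 'M[R]_(d, d.+1)) (Q : 'M[R]_(n.-1, d)) Y :
  lin_isometry A -> Vpol l Q ->
  (phimap l A (pclass l Q) Y <-> Vpol l Y /\ Y *m Y^T = Q *m Q^T).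
Proof.
move=> hA hQ; have hAA := iso_AAT hA.
split.
  move=> [Q' [[hQ' /rot_equivE [O1 [hO1 [_ eQ]]]] [hY /rot_equivE [O2 [hO2 [_ eY]]]]]].
  split => //; rewrite eY /Fmap eQ !gram_mul //.
move=> [hY hg].
have hr : (\rank (Q *m A) < d.+1)%N.
  by rewrite ltnS (leq_trans (mxrankM_maxr _ _)) // rank_leq_row.
have hg' : (Q *m A) *m (Q *m A)^T = Y *m Y^T by rewrite gram_mul.
have [O [hO [dO eY]]] := gram_rot hr hg'.
exists Q; split; first exact: pclass_mem.
split => //; apply/rot_equivE; exists O; split => //.
Qed.

Lemma fiber_char n d (l : 'I_n -> R) (A : 'M[R]_(d, d.+1)) (P : 'M[R]_(n.-1, d)) C :
  lin_isometry A -> Vpol l P ->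
  (phifiber l A P C <-> exists Q, Vpol l Q /\ C = pclass l Q /\ Q *m Q^T = P *m P^T).
Proof.
move=> hA hP; have hAA := iso_AAT hA.
have hAn : forall v, enorm (v *m A) = enorm v by move=> v; exact: enorm_mul.
split.
  move=> [[Q [hQ ->]] he]; exists Q; split => //; split => //.
  have : phimap l A (pclass l Q) (Q *m A).
    by apply/(phimap_char _ hA hQ); split; [exact: Vpol_mul|rewrite gram_mul].
  rewrite he => /(phimap_char _ hA hP) [_].
  by rewrite gram_mul.
move=> [Q [hQ [-> hg]]]; split; first by exists Q.
apply/seteqP; split => Y.
  by move/(phimap_char _ hA hQ) => [hY hYg]; apply/(phimap_char _ hA hP); rewrite hYg.
by move/(phimap_char _ hA hP) => [hY hYg]; apply/(phimap_char _ hA hQ); rewrite hYg.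
Qed.
End Aux.
Unset Implicit Arguments.

Theorem proposition5p2 (R : realType) (n d : nat) (l : 'I_n -> R)
  (A : 'M[R]_(d, d.+1)) (P : 'M[R]_(n.-1, d)) :
  (3 <= n)%N -> (2 <= d)%N -> (forall k, 0 < l k) -> lin_isometry A ->
  Vpol l P ->
  ((\rank P = d) ->
     exists C1 C2, C1 <> C2 /\ phifiber l A P = [set C1] `|` [set C2]) /\
  ((\rank P < d)%N -> exists C, phifiber l A P = [set C]).
Proof.
case: d A P => [//|d] A P _ _ _ hA hP.
have hAA := iso_AAT hA.
split.
  move=> hrk.
  pose r := refl R d.
  have hr : ortho r := refl_ortho R d.
  have hPr : Vpol l (P *m r) by apply: Vpol_mul => // v; exact: enorm_mul.
  have gPr : (P *m r) *m (P *m r)^T = P *m P^T by rewrite gram_mul.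
  exists (pclass l P), (pclass l (P *m r)); split.
    move=> he.
    have : pclass l P (P *m r) by rewrite he; exact: pclass_mem.
    move=> [_ /rot_equivE [O [hO [dO eO]]]].
    have /row_fullP [B hB] : row_full P by rewrite /row_full hrk.
    have erO : r = O by rewrite -[r]mul1mx -hB -mulmxA eO mulmxA hB mul1mx.
    have := refl_det R d; rewrite -/r erO dO => h.
    have : (1 : R) = -1 := h. lra.
  apply/seteqP; split => C.
    move/(fiber_char _ hA hP) => [Q [hQ [-> hg]]].
    have [O [hO eQ]] := gram_ortho (esym hg).
    have [dO|dO] := ortho_det hO.
      by left; apply/esym/pclass_eq/rot_equivE; exists O.
    right; apply/esym/pclass_eq/rot_equivE; exists (r^T *m O); split; [|split].
    - exact: orthoM (orthotr hr) hO.
    - by rewrite det_mulmx det_tr refl_det dO mulrNN mulr1.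
    - by rewrite mulmxA -(mulmxA P) hr mulmx1.
  move=> [] ->; apply/(fiber_char _ hA hP).
    by exists P; split => //; split.
  by exists (P *m r); split => //; split.
move=> hrk; exists (pclass l P).
apply/seteqP; split => C.
  move/(fiber_char _ hA hP) => [Q [hQ [-> hg]]].
  have [O [hO [dO eQ]]] := gram_rot hrk (esym hg).
  by apply/esym/pclass_eq/rot_equivE; exists O.
move=> ->; apply/(fiber_char _ hA hP).
by exists P; split => //; split.
Qed.
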